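(* Under the hypotheses and notation of the context (PQRS-form with $m\ge1$ and $S$ invertible self-adjoint), the scattering matrix admits, for all sufficiently small $k>0$, the convergent expansion $$\mathcal S(k)=-I^{(n)}+2M_Q\left(I^{(a)}+RR^*+QQ^*\right)^{-1}M_Q^*-2\mathrm ik\,X\left[\sum_{j=0}^\infty(\mathrm ik)^j\left(S^{-1}X^*X\right)^j\right]S^{-1}X^*,$$ and in particular $$\lim_{k\to0^+}\mathcal S(k)=-I^{(n)}+2M_Q\left(I^{(a)}+RR^*+QQ^*\right)^{-1}M_Q^*.$$
   Context: $I^{(j)}$ denotes the $j\times j$ identity matrix. Let $0\le r_A,r_B\le n$ with $m=r_A+r_B-n\ge1$, $a=n-r_A$, $b=n-r_B$, $S\in\mathbb C^{m\times m}$ invertible self-adjoint, $P\in\mathbb C^{m\times b}$, $Q\in\mathbb C^{a\times b}$, $R\in\mathbb C^{a\times m}$. The vertex coupling is given by the PQRS-form $B_{PQRS}\Psi'=A_{PQRS}\Psi$ with (block sizes $m,a,b$) $$B_{PQRS}=\begin{pmatrix} I^{(m)} & 0 & P\\ R & I^{(a)} & Q\\ 0&0&0\end{pmatrix},\qquad A_{PQRS}=\begin{pmatrix} S & -SR^* & 0\\ 0&0&0\\ -P^* & (RP-Q)^* & I^{(b)}\end{pmatrix};$$ its scattering matrix is $\mathcal S(k)=-(A+\mathrm ikB)^{-1}(A-\mathrm ikB)$, $k>0$, with $A=-A_{PQRS}$, $B=B_{PQRS}$. Further, $$M_Q=\begin{pmatrix}R^*\\ I^{(a)}\\ Q^*\end{pmatrix},\quad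 X=\begin{pmatrix}I^{(m)}\\0\\P^*\end{pmatrix}-M_Q\left(I^{(a)}+RR^*+QQ^*\right)^{-1}(R+QP^* ).$$ *)

(* Defs.v *)
From HB Require Import structures.
From mathcomp Require Import all_boot all_order all_algebra.
Set Implicit Arguments. Unset Strict Implicit. Unset Printing Implicit Defensive.
Import Order.TTheory GRing.Theory Num.Theory Num.Syntax.
Local Open Scope ring_scope.

Definition adjmx {C : numClosedFieldType} {p q : nat} (M : 'M[C]_(p, q)) : 'M[C]_(q, p) :=
  (map_mx Num.conj M)^T.

Section PQRS.
Variables (C : numClosedFieldType) (m a b : nat).
Variables (S : 'M[C]_m) (P : 'M[C]_(m, b)) (Q : 'M[C]_(a, b)) (R : 'M[C]_(a, m)).

(* 3x3 block matrix with block sizes m, a, b ; type 'M_(m + a + b) = 'M_((m+a)+b) *)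
Definition block3 {r1 r2 r3 c1 c2 c3 : nat}
  (X11 : 'M[C]_(r1,c1)) (X12 : 'M[C]_(r1,c2)) (X13 : 'M[C]_(r1,c3))
  (X21 : 'M[C]_(r2,c1)) (X22 : 'M[C]_(r2,c2)) (X23 : 'M[C]_(r2,c3))
  (X31 : 'M[C]_(r3,c1)) (X32 : 'M[C]_(r3,c2)) (X33 : 'M[C]_(r3,c3))
  : 'M[C]_(r1 + r2 + r3, c1 + c2 + c3) :=
  block_mx (block_mx X11 X12 X21 X22) (col_mx X13 X23) (row_mx X31 X32) X33.

Definition B_PQRS : 'M[C]_(m + a + b) :=
  block3 1%:M 0 P
         R 1%:M Q
         0 0 0.

Definition A_PQRS : 'M[C]_(m + a + b) :=
  block3 S (- (S *m adjmx R)) 0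
         0 0 0
         (- adjmx P) (adjmx (R *m P - Q)) 1%:M.

Definition scatt (k : C) : 'M[C]_(m + a + b) :=
  let A := - A_PQRS in
  - (invmx (A + ('i * k) *: B_PQRS) *m (A - ('i * k) *: B_PQRS)).

Definition M_Q : 'M[C]_(m + a + b, a) :=
  col_mx (col_mx (adjmx R) 1%:M) (adjmx Q).

Definition Kinv : 'M[C]_a :=
  invmx (1%:M + R *m adjmx R + Q *m adjmx Q).

Definition X_mx : 'M[C]_(m + a + b, m) :=
  col_mx (col_mx 1%:M 0) (adjmx P) - M_Q *m Kinv *m (R + Q *m adjmx P).

Definition scatt_lim : 'M[C]_(m + a + b) :=
  - 1%:M + 2%:R *: (M_Q *m Kinv *m adjmx M_Q).

Definition partial_series (k : C) (N : nat) : 'M[C]_m :=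
  \sum_(j < N) (('i * k) ^+ j *: (invmx S *m adjmx X_mx *m X_mx) ^+ j).

End PQRS.

Definition mx_seq_cvg {C : numClosedFieldType} {p q : nat}
  (u : nat -> 'M[C]_(p, q)) (L : 'M[C]_(p, q)) : Prop :=
  forall eps : C, 0 < eps -> exists N : nat, forall M : nat, (N <= M)%N ->
    forall i j, `|u M i j - L i j| < eps.

Definition mx_lim_0plus {C : numClosedFieldType} {p q : nat}
  (f : C -> 'M[C]_(p, q)) (L : 'M[C]_(p, q)) : Prop :=
  forall eps : C, 0 < eps -> exists delta : C, 0 < delta /\
    forall k : C, 0 < k -> k < delta -> forall i j, `|f k i j - L i j| < eps.

(* Main.v *)
Require Import Defs.
From HB Require Import structures.
From mathcomp Require Import all_boot all_order all_algebra.
Set Implicit Arguments. Unset Strict Implicit. Unset Printing Implicit Defensive.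
Import Order.TTheory GRing.Theory Num.Theory Num.Syntax.
Local Open Scope ring_scope.

Section Adj.
Variable C : numClosedFieldType.

Lemma adjmxK p q (M : 'M[C]_(p,q)) : adjmx (adjmx M) = M.
Proof. by apply/matrixP=> i j; rewrite !mxE conjCK. Qed.

Lemma adjmxM p q r (A : 'M[C]_(p,q)) (B : 'M[C]_(q,r)) :
  adjmx (A *m B) = adjmx B *m adjmx A.
Proof. by rewrite /adjmx map_mxM trmx_mul. Qed.

Lemma adjmxD p q (A B : 'M[C]_(p,q)) : adjmx (A + B) = adjmx A + adjmx B.
Proof. by rewrite /adjmx map_mxD linearD. Qed.

Lemma adjmxN p q (A : 'M[C]_(p,q)) : adjmx (- A) = - adjmx A.
Proof. by rewrite /adjmx map_mxN linearN. Qed.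

Lemma adjmxB p q (A B : 'M[C]_(p,q)) : adjmx (A - B) = adjmx A - adjmx B.
Proof. by rewrite adjmxD adjmxN. Qed.

Lemma adjmx0 p q : adjmx (0 : 'M[C]_(p,q)) = 0.
Proof. by apply/matrixP=> i j; rewrite !mxE conjC0. Qed.

Lemma adjmx1 p : adjmx (1%:M : 'M[C]_p) = 1%:M.
Proof. by apply/matrixP=> i j; rewrite !mxE conjC_nat eq_sym. Qed.

Lemma adjmxZ p q c (A : 'M[C]_(p,q)) : adjmx (c *: A) = c^* *: adjmx A.
Proof. by apply/matrixP=> i j; rewrite !mxE rmorphM. Qed.

Lemma adjmx_col p1 p2 q (A : 'M[C]_(p1,q)) (B : 'M[C]_(p2,q)) :
  adjmx (col_mx A B) = row_mx (adjmx A) (adjmx B).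
Proof. by rewrite /adjmx map_col_mx tr_col_mx. Qed.

Lemma adjmx_row p q1 q2 (A : 'M[C]_(p,q1)) (B : 'M[C]_(p,q2)) :
  adjmx (row_mx A B) = col_mx (adjmx A) (adjmx B).
Proof. by rewrite /adjmx map_row_mx tr_row_mx. Qed.

Lemma adjmx_inv p (A : 'M[C]_p) : adjmx (invmx A) = invmx (adjmx A).
Proof. by rewrite /adjmx map_invmx trmx_inv. Qed.

End Adj.

Section Pos.
Variable C : numClosedFieldType.

Lemma vadj_ge0 p (v : 'rV[C]_p) : 0 <= (v *m adjmx v) 0 0.
Proof.
rewrite mxE; apply: sumr_ge0 => j _; rewrite !mxE; exact: mul_conjC_ge0.
Qed.

Lemma vadj_eq0 p (v : 'rV[C]_p) : (v *m adjmx v) 0 0 = 0 -> v = 0.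
Proof.
rewrite mxE => H; apply/matrixP => i j; rewrite (ord1 i) mxE.
have Hn : forall l : 'I_p, true -> 0 <= v 0 l * adjmx v l 0.
  by move=> l _; rewrite !mxE mul_conjC_ge0.
have := (@psumr_eq0P _ _ xpredT (fun l => v 0 l * adjmx v l 0) Hn H j isT).
by rewrite !mxE => /eqP; rewrite mul_conjC_eq0 => /eqP.
Qed.
End Pos.

Section Gen.
Variables (C : numClosedFieldType) (m a b n : nat).

Lemma lin_aux (W : lmodType C) (u w : W) (d : C) :
  u - d *: w + (2%:R * d) *: w + (- u - d *: w) = 0.
Proof.
rewrite mulr_natl mulr2n scalerDl (addrA (u - _)) subrK -opprD subrr //.
Qed.

Lemma YE3_gen (Xv : 'M[C]_(n,m)) (MQv : 'M[C]_(n,a)) (Kv : 'M[C]_a) (Zi : 'M[C]_m)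
  (E3v : 'M[C]_(n,b)) (Qv : 'M[C]_(a,b)) (d : C) :
  adjmx MQv *m E3v = Qv ->
  (- 1%:M + 2%:R *: (MQv *m Kv *m adjmx MQv) - d *: (Xv *m Zi *m adjmx Xv)) *m E3v
  = - E3v + 2%:R *: (MQv *m Kv *m Qv) - d *: (Xv *m Zi *m (adjmx Xv *m E3v)).
Proof.
move=> h; rewrite mulmxBl mulmxDl mulNmx mul1mx -!scalemxAl -!mulmxA h //.
Qed.

Lemma e3_gen (Mk Nk Av Bv : 'M[C]_n) (E3v : 'M[C]_(n,b)) (MQv : 'M[C]_(n,a))
  (Xv E1v : 'M[C]_(n,m)) (Zv : 'M[C]_m) (Fv : 'M[C]_(n,a)) (Kiv : 'M[C]_a)
  (Qv : 'M[C]_(a,b)) (W : 'M[C]_(m,b)) (c : C) :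
  Zv \in unitmx -> Mk = - Av + c *: Bv -> Nk = - Av - c *: Bv ->
  Mk *m MQv = c *: Fv -> Mk *m Xv = - (E1v *m Zv) ->
  Fv *m Kiv *m Qv + E1v *m W = Bv *m E3v ->
  Mk *m (- E3v + 2%:R *: (MQv *m Kiv *m Qv) - (2%:R * c) *: (Xv *m invmx Zv *m W))
    + Nk *m E3v = 0.
Proof.
move=> hZ eM eN hMQ hX hF.
rewrite mulmxBr mulmxDr mulmxN -!scalemxAr !mulmxA hMQ hX !mulNmx mulmxK //.
rewrite scalerN opprK -!scalemxAl scalerA -(addrA (- (Mk *m E3v))) -scalerDr hF.
rewrite eM eN !mulmxDl !mulNmx -!scalemxAl opprD opprK -addrA.
set u := Av *m E3v; set w := Bv *m E3v.
by rewrite addrA; apply: lin_aux.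
Qed.

End Gen.

Section Blocks.
Variables (C : numClosedFieldType) (m a b : nat).
Variables (S : 'M[C]_m) (P : 'M[C]_(m, b)) (Q : 'M[C]_(a, b)) (R : 'M[C]_(a, m)).

Let K := (1%:M + R *m adjmx R + Q *m adjmx Q : 'M[C]_a).
Let V := R + Q *m adjmx P.
Let E : 'M[C]_(m + a + b, m) := col_mx (col_mx 1%:M 0) (adjmx P).
Let E1 : 'M[C]_(m + a + b, m) := col_mx (col_mx 1%:M 0) 0.
Let E3 : 'M[C]_(m + a + b, b) := col_mx 0 1%:M.
Let A := A_PQRS S P Q R.
Let B := B_PQRS P Q R.
Let MQ := M_Q Q R.

Lemma A_MQ : A *m MQ = 0.
Proof.
rewrite /A /MQ /A_PQRS /M_Q /block3 mul_block_col mul_block_col mul_col_mx mul_row_col.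
rewrite !mulmx1 !mul0mx !mul1mx !addr0 ?add0r !mulNmx adjmxB adjmxM.
by rewrite subrr addKr addNr !col_mx0 addr0 col_mx0.
Qed.

Lemma B_MQ : B *m MQ = col_mx (col_mx (adjmx V) K) 0.
Proof.
rewrite /B /MQ /B_PQRS /M_Q /block3 mul_block_col mul_block_col mul_col_mx mul_row_col.
rewrite !mulmx1 !mul0mx !mul1mx ?addr0 ?add0r /V /K adjmxD adjmxM adjmxK.
by rewrite add_col_mx (addrC (R *m _)).
Qed.

Lemma adjMQ_MQ : adjmx MQ *m MQ = K.
Proof.
rewrite /MQ /M_Q !adjmx_col mul_row_col mul_row_col adjmx1 !adjmxK mulmx1. by rewrite /K (addrC (R *m _)).
Qed.

Lemma adjMQ_E : adjmx MQ *m E = V.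
Proof.
by rewrite /MQ /M_Q /E !adjmx_col mul_row_col mul_row_col adjmx1 !adjmxK mulmx1 mulmx0 addr0.
Qed.

Lemma adjMQ_E3 : adjmx MQ *m E3 = Q.
Proof.
rewrite /MQ /M_Q /E3 !adjmx_col mul_row_col. by rewrite mulmx0 add0r mulmx1 adjmxK.
Qed.

Lemma adjE_E : adjmx E *m E = 1%:M + P *m adjmx P.
Proof.
by rewrite /E !adjmx_col mul_row_col mul_row_col adjmx1 adjmx0 !adjmxK mulmx1 mul0mx addr0.
Qed.

Lemma adjE_E3 : adjmx E *m E3 = P.
Proof.
by rewrite /E /E3 !adjmx_col mul_row_col adjmxK mulmx1 mulmx0 add0r.
Qed.

Lemma A_E : A *m E = E1 *m S.
Proof.
rewrite /A /E /E1 /A_PQRS /block3 mul_block_col mul_block_col mul_col_mx mul_row_col.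
rewrite !mulmx1 !mul0mx !mul1mx ?mulmx0 ?addr0 ?add0r !mul_col_mx mul1mx !mul0mx.
by rewrite addNr col_mx0 addr0.
Qed.

Lemma B_E : B *m E = col_mx (col_mx (1%:M + P *m adjmx P) V) 0.
Proof.
rewrite /B /E /B_PQRS /block3 mul_block_col mul_block_col mul_col_mx mul_row_col.
rewrite !mulmx1 !mul0mx !mul1mx ?mulmx0 ?addr0 ?add0r. by rewrite add_col_mx.
Qed.

Lemma A_E3 : A *m E3 = E3.
Proof.
rewrite /A /E3 /A_PQRS /block3 mul_block_col mul_col_mx.
by rewrite !mulmx1 !mulmx0 ?addr0 ?add0r !col_mx0 add0r.
Qed.

Lemma B_E3 : B *m E3 = col_mx (col_mx P Q) 0.
Proof.
rewrite /B /E3 /B_PQRS /block3 mul_block_col mul_col_mx.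
by rewrite !mulmx1 !mulmx0 ?addr0 ?add0r !col_mx0 add0r.
Qed.

Lemma adjK : adjmx K = K.
Proof. by rewrite /K !adjmxD !adjmxM !adjmxK adjmx1. Qed.


Lemma addE p q (A1 A2 : 'M[C]_(p,q)) i j : (A1 + A2) i j = A1 i j + A2 i j.
Proof. by rewrite mxE. Qed.

Lemma K_unit : K \in unitmx.
Proof.
rewrite unitmxE unitfE; apply/negP => /det0P [v nz vK].
have H : (v *m K *m adjmx v) 0 0 = 0 by rewrite vK mul0mx mxE.
have eR : v *m (R *m adjmx R) *m adjmx v = (v *m R) *m adjmx (v *m R).
  by rewrite adjmxM !mulmxA.
have eQ : v *m (Q *m adjmx Q) *m adjmx v = (v *m Q) *m adjmx (v *m Q).
  by rewrite adjmxM !mulmxA.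
move: H; rewrite /K !mulmxDr !mulmxDl mulmx1 eR eQ !addE => /eqP.
rewrite paddr_eq0 ?addr_ge0 ?vadj_ge0 // paddr_eq0 ?vadj_ge0 //.
by case/andP => /andP [/eqP /vadj_eq0 v0 _] _; rewrite v0 eqxx in nz.
Qed.

Let Kinv := invmx K.
Let X := X_mx P Q R.

Lemma XE : X = E - MQ *m Kinv *m V.
Proof. by []. Qed.

Lemma adjMQ_X : adjmx MQ *m X = 0.
Proof.
by rewrite XE mulmxBr adjMQ_E !mulmxA adjMQ_MQ mulmxV ?K_unit // mul1mx subrr.
Qed.

Lemma A_X : A *m X = E1 *m S.
Proof. by rewrite XE mulmxBr A_E !mulmxA A_MQ !mul0mx subr0. Qed.

Lemma adjX : adjmx X = adjmx E - adjmx V *m Kinv *m adjmx MQ.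
Proof. by rewrite XE adjmxB !adjmxM /Kinv adjmx_inv adjK mulmxA. Qed.

Lemma adjX_X : adjmx X *m X = 1%:M + P *m adjmx P - adjmx V *m Kinv *m V.
Proof.
rewrite {1}adjX mulmxBl -[_ *m adjmx MQ *m X]mulmxA adjMQ_X mulmx0 subr0.
rewrite XE mulmxBr adjE_E !mulmxA.
have -> : adjmx E *m MQ = adjmx V by rewrite -adjMQ_E adjmxM adjmxK.
by [].
Qed.

Lemma B_X : B *m X = E1 *m (adjmx X *m X).
Proof.
rewrite adjX_X {1}XE mulmxBr B_E !mulmxA B_MQ /E1 !mul_col_mx mul1mx !mul0mx.
rewrite !opp_col_mx !add_col_mx oppr0 addr0.
by rewrite /Kinv mulmxV ?K_unit // mul1mx subrr.
Qed.

Lemma adjX_E3 : adjmx X *m E3 = P - adjmx V *m Kinv *m Q.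
Proof. by rewrite adjX mulmxBl adjE_E3 -[_ *m adjmx MQ *m E3]mulmxA adjMQ_E3. Qed.


Variable c : C.
Hypothesis hc : c != 0.
Let XX := adjmx X *m X.
Let Z := S - c *: XX.
Hypothesis hZ : Z \in unitmx.
Let Mk := - A + c *: B.
Let Nk := - A - c *: B.

Lemma Mk_X : Mk *m X = - (E1 *m Z).
Proof.
rewrite /Mk mulmxDl mulNmx A_X -scalemxAl B_X /Z [E1 *m (S - _)]mulmxBr -scalemxAr.
by rewrite opprB addrC.
Qed.

Lemma Mk_MQ : Mk *m MQ = c *: col_mx (col_mx (adjmx V) K) 0.
Proof. by rewrite /Mk mulmxDl mulNmx A_MQ oppr0 add0r -scalemxAl B_MQ. Qed.

Lemma Mk_E3 : Mk *m E3 = col_mx (col_mx (c *: P) (c *: Q)) (- 1%:M).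
Proof.
rewrite /Mk mulmxDl mulNmx A_E3 -scalemxAl B_E3 /E3 !scale_col_mx scaler0.
by rewrite opp_col_mx !add_col_mx oppr0 add0r addr0.
Qed.


Let T : 'M[C]_(m + a + b) := row_mx (row_mx X MQ) E3.

Lemma MkT : Mk *m T = block_mx (block_mx (- Z) (c *: adjmx V) 0 (c *: K))
                         (col_mx (c *: P) (c *: Q)) 0 (- 1%:M).
Proof.
rewrite /T !mul_mx_row Mk_X Mk_MQ Mk_E3 /E1 !mul_col_mx mul1mx !mul0mx.
rewrite !opp_col_mx !oppr0 !scale_col_mx scaler0 block_mxEh; congr row_mx.
by rewrite -block_mxEh block_mxEv row_mx0 block_mxEh.
Qed.

Lemma unitN p (M : 'M[C]_p) : (- M \in unitmx) = (M \in unitmx).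
Proof. by rewrite -scaleN1r unitmxZ // unitrN1. Qed.

Lemma MkT_unit : Mk *m T \in unitmx.
Proof.
rewrite MkT unitmxE !det_ublock !unitrM -!unitmxE !unitN hZ unitmx1 unitmxZ ?K_unit //.
by rewrite unitfE.
Qed.

Lemma Mk_unit : Mk \in unitmx.
Proof. by have := MkT_unit; rewrite unitmx_mul => /andP []. Qed.

Lemma T_unit : T \in unitmx.
Proof. by have := MkT_unit; rewrite unitmx_mul => /andP []. Qed.




Let Y := scatt_lim Q R - (2%:R * c) *: (X *m invmx Z *m adjmx X).

Lemma adjX_MQ : adjmx X *m MQ = 0.
Proof. by rewrite -[MQ]adjmxK -adjmxM adjMQ_X adjmx0. Qed.

Lemma YX : Y *m X = - X - (2%:R * c) *: (X *m invmx Z *m XX).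
Proof.
rewrite /Y /scatt_lim mulmxBl mulmxDl mulNmx mul1mx -!scalemxAl -!mulmxA.
by rewrite [adjmx (M_Q Q R) *m X]adjMQ_X !mulmx0 scaler0 addr0.
Qed.

Lemma e1 : (Mk *m Y + Nk) *m X = 0.
Proof.
rewrite mulmxDl -mulmxA YX mulmxBr mulmxN -scalemxAr !mulmxA Mk_X.
rewrite [Nk *m X]mulmxBl !mulNmx A_X -scalemxAl B_X mulmxK // -mulmxA opprK.
rewrite scalerN opprK /Z mulmxBr -scalemxAr. exact: lin_aux.
Qed.


Lemma YMQ : Y *m MQ = MQ.
Proof.
rewrite /Y /scatt_lim mulmxBl mulmxDl mulNmx mul1mx -!scalemxAl -!mulmxA.
rewrite [adjmx X *m MQ]adjX_MQ [adjmx (M_Q Q R) *m MQ]adjMQ_MQ. rewrite /Defs.Kinv mulVmx ?K_unit //.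
rewrite !mulmx0 scaler0 subr0 mulmx1 scaler_nat mulr2n addrA addNr add0r //.
Qed.

Lemma e2 : (Mk *m Y + Nk) *m MQ = 0.
Proof.
rewrite mulmxDl -mulmxA YMQ /Mk /Nk -mulmxDl addrACA -opprD subrr addr0.
by rewrite mulNmx mulmxDl A_MQ addr0 oppr0.
Qed.

Lemma FE3 : col_mx (col_mx (adjmx V) K) 0 *m Kinv *m Q + E1 *m (adjmx X *m E3)
   = B *m E3.
Proof.
rewrite adjX_E3 B_E3 /E1 !mul_col_mx !mul0mx mul1mx add_col_mx addr0 add_col_mx addr0.
by rewrite /Kinv mulmxV ?K_unit // mul1mx addrC subrK.
Qed.


Lemma e3 : (Mk *m Y + Nk) *m E3 = 0.
Proof.
rewrite mulmxDl -mulmxA /Y /scatt_lim (YE3_gen X (Defs.Kinv Q R) (invmx Z) (2%:R * c) (adjMQ_E3)).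
apply: (e3_gen hZ _ _ Mk_MQ Mk_X) => //.
exact: FE3.
Qed.

Lemma ident : - (invmx Mk *m Nk) = Y.
Proof.
have H : Mk *m Y + Nk = 0.
  rewrite -[Mk *m Y + Nk](mulmxK T_unit) /T !mul_mx_row e1 e2 e3.
  by rewrite !row_mx0 mul0mx.
have -> : Nk = - (Mk *m Y) by apply/eqP; rewrite -addr_eq0 addrC H.
by rewrite mulmxN opprK mulKmx // Mk_unit.
Qed.

End Blocks.

Section Norm.
Variable C : numClosedFieldType.

Definition mn p q (A : 'M[C]_(p,q)) : C := \sum_i \sum_j `|A i j|.

Lemma term_le_sum (I : finType) (F : I -> C) i :
  (forall j, 0 <= F j) -> F i <= \sum_j F j.
Proof.
move=> h; rewrite (bigD1 i) //= lerDl; apply: sumr_ge0 => j _; exact: h.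
Qed.

Lemma mn_ge0 p q (A : 'M[C]_(p,q)) : 0 <= mn A.
Proof. by apply: sumr_ge0 => i _; apply: sumr_ge0 => j _. Qed.

Lemma entry_le p q (A : 'M[C]_(p,q)) i j : `|A i j| <= mn A.
Proof.
apply: le_trans (term_le_sum _ _) => //; last by move=> l; apply: sumr_ge0.
exact: term_le_sum.
Qed.

Lemma mnD p q (A B : 'M[C]_(p,q)) : mn (A + B) <= mn A + mn B.
Proof.
rewrite /mn -big_split ler_sum //= => i _; rewrite -big_split ler_sum //= => j _.
by rewrite mxE ler_normD.
Qed.

Lemma mnN p q (A : 'M[C]_(p,q)) : mn (- A) = mn A.
Proof. by rewrite /mn; apply: eq_bigr => i _; apply: eq_bigr => j _; rewrite mxE normrN. Qed.

Lemma mnZ p q c (A : 'M[C]_(p,q)) : mn (c *: A) = `|c| * mn A.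
Proof.
rewrite /mn mulr_sumr; apply: eq_bigr => i _; rewrite mulr_sumr.
by apply: eq_bigr => j _; rewrite mxE normrM.
Qed.

Lemma mnM p q r (A : 'M[C]_(p,q)) (B : 'M[C]_(q,r)) : mn (A *m B) <= mn A * mn B.
Proof.
pose cB j := \sum_l `|B l j|.
have -> : mn B = \sum_j cB j by rewrite /mn exchange_big.
rewrite /mn big_distrl /=; apply: ler_sum => i _.
rewrite [X in _ <= X]big_distrr /=; apply: ler_sum => j _.
rewrite mxE big_distrl /=; apply: le_trans (ler_norm_sum _ _ _) _.
apply: ler_sum => l _; rewrite normrM ler_pM //.
by rewrite /cB; apply: (term_le_sum (F := fun l => `|B l j|)) => l0.
Qed.

Lemma mn_eq0 p q (A : 'M[C]_(p,q)) : mn A = 0 -> A = 0.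
Proof.
move=> h; apply/matrixP => i j; rewrite mxE; apply/eqP; rewrite -normr_eq0.
by rewrite eq_le normr_ge0 andbT -h entry_le.
Qed.

Lemma mn1 p : mn (1%:M : 'M[C]_p) = p%:R.
Proof.
rewrite /mn (eq_bigr (fun=> 1)) ?sumr_const ?card_ord // => i _.
rewrite (bigD1 i) //= big1 ?addr0 => [|j /negPf ij]; rewrite mxE ?eqxx ?normr1 //.
by rewrite eq_sym ij normr0.
Qed.

End Norm.

Section Neumann.
Variable C : archiClosedFieldType.
Variable p : nat.
Variable G : 'M[C]_p.
Hypothesis hG : mn G * 2 <= 1.
Let D := 1%:M - G.

Lemma shrink (x : C) : 0 <= x -> x * 2 <= x + x * (mn G * 2) -> False -> True.
Proof. by []. Qed.

Lemma D_unit : D \in unitmx.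
Proof.
rewrite unitmxE unitfE; apply/negP => /det0P [v nz vD].
have vG : v = v *m G.
  by apply/eqP; rewrite -subr_eq0 -[X in X - _]mulmx1 -mulmxBr; apply/eqP.
have h : mn v <= mn v * mn G by rewrite {1}vG mnM.
have h2 : mn v * 2 <= mn v.
  apply: le_trans (_ : mn v * (mn G * 2) <= _).
    by rewrite mulrA ler_pM2r // ?ltr0n.
  by rewrite -{2}[mn v]mulr1 ler_wpM2l ?mn_ge0.
move: h2; rewrite mulr_natr mulr2n gerDl => h3.
have : mn v = 0 by apply/eqP; rewrite eq_le h3 mn_ge0.
by move/mn_eq0 => v0; rewrite v0 eqxx in nz.
Qed.

Lemma Dinv_bound : mn (invmx D) <= 2 * p%:R.
Proof.
have e : invmx D = 1%:M + G *m invmx D.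
  have h1 : D *m invmx D = 1%:M := mulmxV D_unit.
  rewrite mulmxBl mul1mx in h1.
  by apply/eqP; rewrite -[X in _ == X + _]h1 subrK.
have h : mn (invmx D) <= p%:R + mn G * mn (invmx D).
  by rewrite {1}e -mn1; apply: le_trans (mnD _ _) _; rewrite lerD2l mnM.
have h2 : mn (invmx D) * 2 <= 2 * p%:R + mn (invmx D).
  apply: le_trans (_ : (p%:R + mn G * mn (invmx D)) * 2 <= _).
    by rewrite ler_pM2r ?ltr0n.
  rewrite mulrDl mulrC lerD2l mulrAC -[X in _ <= X]mul1r ler_wpM2r ?mn_ge0 //.
move: h2; rewrite mulr_natr mulr2n lerD2r //.
Qed.


Lemma series_eq N : \sum_(j < N) G ^+ j = invmx D - invmx D *m G ^+ N.
Proof.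
have h' : D *m \sum_(j < N) G ^+ j = 1%:M - G ^+ N.
  rewrite mulmxE /D idmxE -(opprB G 1) mulNr -subrX1 opprB //.
by rewrite -[LHS](mulKmx D_unit) h' mulmxBr mulmx1.
Qed.

Lemma pow_bound N : mn (G ^+ N) * 2 ^+ N <= p%:R.
Proof.
elim: N => [|N IH]; first by rewrite !expr0 mulr1 -idmxE mn1.
rewrite exprSr [2 ^+ N.+1]exprSr -mulmxE.
apply: le_trans (_ : mn (G ^+ N) * mn G * (2 ^+ N * 2) <= _).
  by rewrite ler_wpM2r ?mulr_ge0 ?exprn_ge0 ?ler0n ?mnM.
rewrite mulrACA; apply: le_trans IH.
by rewrite -[X in _ <= X]mulr1 ler_wpM2l ?mulr_ge0 ?exprn_ge0 ?ler0n ?mn_ge0.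
Qed.

Lemma neumann_cvg : mx_seq_cvg (fun N => \sum_(j < N) G ^+ j) (invmx D).
Proof.
move=> eps heps.
have [N0 hN0] : exists N0 : nat, 2 * p%:R ^+ 2 / eps < N0%:R.
  exists (Num.bound (2 * p%:R ^+ 2 / eps)); apply: archi_boundP.
  by rewrite divr_ge0 ?mulr_ge0 ?exprn_ge0 ?ler0n ?ltW.
exists N0 => N hN i j.
have -> : (\sum_(j0 < N) G ^+ j0) i j - invmx D i j
   = (\sum_(j0 < N) G ^+ j0 - invmx D) i j by rewrite !mxE.
rewrite series_eq addrAC subrr add0r; apply: le_lt_trans (entry_le _ i j) _.
rewrite mnN; apply: le_lt_trans (mnM _ _) _.
apply: le_lt_trans (_ : 2 * p%:R * mn (G ^+ N) < _).
  by rewrite ler_wpM2r ?mn_ge0 ?Dinv_bound.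
have t0 : 0 < (2 : C) ^+ N by rewrite exprn_gt0 ?ltr0n.
rewrite -(ltr_pM2r t0).
apply: le_lt_trans (_ : 2 * p%:R * p%:R < _).
  by rewrite -(mulrA (2 * p%:R)) ler_wpM2l ?mulr_ge0 ?ler0n ?pow_bound.
have hNt : N%:R < (2 : C) ^+ N by rewrite -natrX ltr_nat ltn_expl.
apply: lt_le_trans (_ : eps * N0%:R <= _).
  by rewrite -ltr_pdivrMl //; move: hN0; rewrite expr2 mulrA mulrC.
rewrite ler_pM2l //; apply: le_trans (ltW hNt); by rewrite ler_nat.
Qed.

End Neumann.

Section Main.
Variables (C : archiClosedFieldType) (m a b : nat).
Variables (S : 'M[C]_m) (P : 'M[C]_(m, b)) (Q : 'M[C]_(a, b)) (R : 'M[C]_(a, m)).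
Hypothesis Su : S \in unitmx.

Let X := X_mx P Q R.
Let M := invmx S *m adjmx X *m X.
Let ak := 2 * (mn M + 1).

Lemma ak_gt0 : 0 < ak.
Proof. by rewrite mulr_gt0 ?ltr0n // ltr_wpDl ?mn_ge0. Qed.

Lemma invmxM_u p (A B : 'M[C]_p) : A \in unitmx -> B \in unitmx ->
  invmx (A *m B) = invmx B *m invmx A.
Proof.
move=> uA uB; have uAB : A *m B \in unitmx by rewrite unitmx_mul uA uB.
rewrite -[RHS](mulKmx uAB) -!mulmxA (mulmxA B) mulmxV // mul1mx mulmxV //.
by rewrite mulmx1.
Qed.

Section K.
Variable k : C.
Hypothesis hk : 0 < k.
Hypothesis hka : k * ak < 1.
Let c := 'i * k.
Let G := c *: M.

Lemma normc : `|c| = k.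
Proof. by rewrite /c normrM normCi mul1r gtr0_norm. Qed.

Lemma hG : mn G * 2 <= 1.
Proof.
rewrite /G mnZ normc; apply: le_trans (ltW hka).
by rewrite /ak -mulrA ler_pM2l // mulrC ler_pM2l ?ltr0n // lerDl ler01.
Qed.

Let D := 1%:M - G.

Lemma ZD : S - c *: (adjmx X *m X) = S *m D.
Proof.
by rewrite /D [S *m (1%:M - G)]mulmxBr mulmx1 /G -scalemxAr /M !mulmxA mulmxV // mul1mx.
Qed.

Lemma Z_unit : S - c *: (adjmx X *m X) \in unitmx.
Proof. by rewrite ZD unitmx_mul Su (D_unit hG). Qed.

Lemma c_neq0 : c != 0.
Proof. by rewrite mulf_neq0 ?neq0Ci // gt_eqF. Qed.

Lemma key_unit : - A_PQRS S P Q R + c *: B_PQRS P Q R \in unitmx.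
Proof. exact: Mk_unit c_neq0 Z_unit. Qed.

Lemma key_ident : scatt S P Q R k =
  scatt_lim Q R - (2%:R * 'i * k) *: (X *m invmx D *m invmx S *m adjmx X).
Proof.
rewrite /scatt /= (ident c_neq0 Z_unit) ZD invmxM_u ?(D_unit hG) //.
by rewrite -mulrA !mulmxA.
Qed.

Lemma key_cvg : mx_seq_cvg (partial_series S P Q R k) (invmx D).
Proof.
move=> eps he; have [N0 h] := neumann_cvg hG he.
exists N0 => N hN i j; have := h N hN i j.
suff -> : partial_series S P Q R k N = \sum_(j0 < N) G ^+ j0 by [].
rewrite /partial_series; apply: eq_bigr => l _; rewrite /G.
move: (nat_of_ord l) => {}l; elim: l => [|l IH]; first by rewrite !expr0 scale1r.
by rewrite !exprS -IH -!mulmxE -scalemxAl -scalemxAr scalerA.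
Qed.

End K.
End Main.

Lemma entry_sub (C : numClosedFieldType) p q (A B : 'M[C]_(p,q)) i j :
  (A - B) i j - A i j = - (B i j).
Proof. by rewrite !mxE addrAC subrr add0r. Qed.

Lemma mn4 (C : numClosedFieldType) p1 p2 p3 p4 p5 (A : 'M[C]_(p1,p2))
  (B : 'M[C]_(p2,p3)) (D : 'M[C]_(p3,p4)) (E : 'M[C]_(p4,p5)) :
  mn (A *m B *m D *m E) <= mn A * mn B * mn D * mn E.
Proof.
apply: le_trans (mnM _ _) _; rewrite ler_wpM2r ?mn_ge0 //.
apply: le_trans (mnM _ _) _; rewrite ler_wpM2r ?mn_ge0 //.
exact: mnM.
Qed.

Theorem mainTheorem5 (C : archiClosedFieldType) (m a b : nat)
  (S : 'M[C]_m) (P : 'M[C]_(m, b)) (Q : 'M[C]_(a, b)) (R : 'M[C]_(a, m)) :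
  (0 < m)%N -> S \in unitmx -> adjmx S = S ->
  (exists delta : C, 0 < delta /\
     forall k : C, 0 < k -> k < delta ->
       (- A_PQRS S P Q R + ('i * k) *: B_PQRS P Q R) \in unitmx /\
       exists T : 'M[C]_m,
         mx_seq_cvg (partial_series S P Q R k) T /\
         scatt S P Q R k =
           scatt_lim Q R - (2%:R * 'i * k) *:
             (X_mx P Q R *m T *m invmx S *m adjmx (X_mx P Q R)))
  /\ mx_lim_0plus (scatt S P Q R) (scatt_lim Q R).
Proof.
move=> _ Su _.
set X := X_mx P Q R.
set M0 := invmx S *m adjmx X *m X.
set a0 := 2 * (mn M0 + 1).
have a0pos : 0 < a0 by rewrite mulr_gt0 ?ltr0n // ltr_wpDl ?mn_ge0.
split.
  exists a0^-1; split; first by rewrite invr_gt0.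
  move=> k hk hkd.
  have hka : k * a0 < 1 by rewrite -ltr_pdivlMr // mul1r.
  split; first exact: key_unit.
  exists (invmx (1%:M - ('i * k) *: M0)); split; first exact: key_cvg.
  exact: key_ident.
move=> eps he.
set K0 := 2 * mn X * (2 * m%:R) * mn (invmx S) * mn (adjmx X).
have K0pos : 0 <= K0.
  by rewrite /K0 !mulr_ge0 ?mn_ge0 ?ler0n.
set b0 := (K0 + 1) / eps.
have b0pos : 0 < b0 by rewrite divr_gt0 // ltr_wpDl.
exists (a0 + b0)^-1; split; first by rewrite invr_gt0 addr_gt0.
move=> k hk hkd.
have h1 : k * (a0 + b0) < 1 by rewrite -ltr_pdivlMr ?addr_gt0 // mul1r.
have hka : k * a0 < 1.
  by apply: le_lt_trans h1; rewrite ler_pM2l // lerDl ltW.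
have hkb : k * (K0 + 1) < eps.
  have : k * b0 < 1 by apply: le_lt_trans h1; rewrite ler_pM2l // lerDr ltW.
  by rewrite /b0 mulrA ltr_pdivrMr // mul1r.
move=> i j.
rewrite (key_ident Su hk hka) entry_sub normrN.
apply: le_lt_trans (entry_le _ i j) _; rewrite mnZ.
apply: le_lt_trans hkb.
have hn : `|2%:R * 'i * k| = 2 * k.
  by rewrite !normrM normCi mulr1 normr_nat gtr0_norm.
apply: le_trans (_ : k * K0 <= _); last by rewrite ler_pM2l // lerDl ler01.
have -> : k * K0 = 2 * k * (mn X * (2 * m%:R) * mn (invmx S) * mn (adjmx X)).
  by rewrite /K0 !mulrA (mulrC k 2).
rewrite hn ler_pM2l ?mulr_gt0 ?ltr0n //.
have h4 := @mn4 C _ _ _ _ _ X (invmx (1%:M - ('i * k) *: M0)) (invmx S) (adjmx X).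
apply: le_trans h4 _.
rewrite ler_wpM2r ?mn_ge0 // ler_wpM2r ?mn_ge0 // ler_wpM2l ?mn_ge0 //.
exact: (Dinv_bound (hG hk hka)).
Qed.
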